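(* For any prime number $p$ and any integer $n\ge 1$, $$r(p,n)=\frac{p^{2n-1}+p^{n+1}-p^{n-1}+p^2-p-1}{p^2-1}.$$
   Context: For a prime $p$ and $n\ge 1$, $r(p,n)$ denotes the number of orbits of the left action of $\mathrm{SL}(2,\mathbb{Z})$ on $(\mathbb{Z}_p\times\mathbb{Z}_p)^n$, where elements of $(\mathbb{Z}_p\times\mathbb{Z}_p)^n$ are viewed as $2\times n$ matrices over $\mathbb{Z}_p$ and a matrix in $\mathrm{SL}(2,\mathbb{Z})$ acts by left matrix multiplication with entries reduced modulo $p$. *)

(* Defs.v *)
From HB Require Import structures.
From mathcomp Require Import all_boot all_order all_algebra.
From Stdlib Require Import ClassicalEpsilon.
Set Implicit Arguments. Unset Strict Implicit. Unset Printing Implicit Defensive.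
Import GRing.Theory.
Local Open Scope ring_scope.

Definition decP (P : Prop) : bool :=
  if excluded_middle_informative P then true else false.

Definition sl2z_act (p n : nat) (M : 'M[int]_2) (A : 'M['Z_p]_(2, n))
  : 'M['Z_p]_(2, n) :=
  map_mx (fun z : int => z%:~R) M *m A.

Definition sl2z_orbit (p n : nat) (A : 'M['Z_p]_(2, n)) : {set 'M['Z_p]_(2, n)} :=
  [set B | decP (exists M : 'M[int]_2, \det M = 1 /\ sl2z_act M A = B)].

(* r(p,n): the number of orbits of SL(2,Z) on (Z_p x Z_p)^n. *)
Definition r (p n : nat) : nat :=
  #|[set sl2z_orbit A | A : 'M['Z_p]_(2, n)]|.

(* Main.v *)
Require Import Defs.
From HB Require Import structures.
From mathcomp Require Import all_boot all_order all_algebra.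
From mathcomp Require Import ring lra zify.
From Stdlib Require Import ClassicalEpsilon.
Import GRing.Theory Num.Theory.
Set Implicit Arguments. Unset Strict Implicit. Unset Printing Implicit Defensive.
Local Open Scope ring_scope.

Section Mx2.
Variable R : comNzRingType.
Definition mx2 (a b c d : R) : 'M[R]_2 :=
  \matrix_(i, j) if i == 0 then (if j == 0 then a else b) else (if j == 0 then c else d).

Lemma mx2E (A : 'M[R]_2) : A = mx2 (A 0 0) (A 0 1) (A 1 0) (A 1 1).
Proof.
apply/matrixP=> i j; rewrite mxE.
by case: i => [[|[|//]] ?]; case: j => [[|[|//]] ?]; congr (A _ _); apply: val_inj.
Qed.

Lemma mx2_mul a b c d a' b' c' d' :
  mx2 a b c d *m mx2 a' b' c' d' =
  mx2 (a*a'+b*c') (a*b'+b*d') (c*a'+d*c') (c*b'+d*d').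
Proof.
apply/matrixP=> i j; rewrite !mxE big_ord_recl big_ord1 !mxE.
by case: i => [[|[|//]] ?]; case: j => [[|[|//]] ?].
Qed.

Lemma det_mx2 a b c d : \det (mx2 a b c d) = a * d - b * c.
Proof.
rewrite (expand_det_row _ 0) big_ord_recl big_ord1 /cofactor !det_mx11 !mxE /=.
rewrite !expr0 !expr1 ?mul1r.
ring.
Qed.

Lemma mx2_1 : mx2 1 0 0 1 = 1%:M.
Proof.
apply/matrixP=> i j; rewrite !mxE.
by case: i => [[|[|//]] ?]; case: j => [[|[|//]] ?].
Qed.
End Mx2.

Lemma map_mx2 (R S : comNzRingType) (f : R -> S) a b c d :
  map_mx f (mx2 a b c d) = mx2 (f a) (f b) (f c) (f d).
Proof.
apply/matrixP=> i j; rewrite !mxE.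
by case: i => [[|[|//]] ?]; case: j => [[|[|//]] ?].
Qed.

Lemma decPE (P : Prop) : Defs.decP P <-> P.
Proof. by rewrite /Defs.decP; case: excluded_middle_informative. Qed.

Section Lift.
Variable F : fieldType.
Hypothesis hlift : forall x : F, exists k : int, k%:~R = x.

Definition liftable (g : 'M[F]_2) :=
  exists M : 'M[int]_2, \det M = 1 /\ map_mx (fun z : int => z%:~R) M = g.

Lemma liftM g h : liftable g -> liftable h -> liftable (g *m h).
Proof.
move=> [M [dM <-]] [N [dN <-]]; exists (M *m N); split.
  by rewrite det_mulmx dM dN mulr1.
by rewrite map_mxM.
Qed.

Lemma liftU x : liftable (mx2 1 x 0 1).
Proof.
have [k <-] := hlift x; exists (mx2 1 k 0 1); split.
  by rewrite det_mx2 mulr1 mulr0 subr0.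
by rewrite map_mx2 rmorph1 rmorph0.
Qed.

Lemma liftL x : liftable (mx2 1 0 x 1).
Proof.
have [k <-] := hlift x; exists (mx2 1 0 k 1); split.
  by rewrite det_mx2 mulr1 mul0r subr0.
by rewrite map_mx2 rmorph1 rmorph0.
Qed.

Lemma lift_c a b c d : c != 0 -> a * d - b * c = 1 -> liftable (mx2 a b c d).
Proof.
move=> c0 hdet.
have hb : b = (a * d - 1) / c by rewrite -hdet opprB addrC subrK mulfK.
have -> : mx2 a b c d = mx2 1 ((a-1)/c) 0 1 *m mx2 1 0 c 1 *m mx2 1 ((d-1)/c) 0 1.
  rewrite !mx2_mul hb; congr mx2; field; done.
by apply: liftM; [apply: liftM; [apply: liftU | apply: liftL] | apply: liftU].
Qed.

Lemma lift_all g : \det g = 1 -> liftable g.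
Proof.
rewrite [g]mx2E det_mx2; move: (g 0 0) (g 0 1) (g 1 0) (g 1 1) => a b c d.
move=> hdet.
have [c0|c0] := eqVneq c 0; last exact: lift_c.
have a0 : a != 0.
  apply/eqP=> a0; move: hdet; rewrite a0 c0 !mul0r mulr0 subr0 => /eqP.
  by rewrite eq_sym oner_eq0.
have -> : mx2 a b c d = mx2 1 0 (-1) 1 *m (mx2 1 0 1 1 *m mx2 a b c d).
    by rewrite mulmxA !mx2_mul; congr mx2; ring.
apply: liftM; first exact: liftL.
rewrite mx2_mul; apply: lift_c.
  by rewrite c0 !mul1r addr0.
by apply: (etrans _ hdet); rewrite c0; ring.
Qed.
End Lift.

Lemma card_fr (F : finFieldType) n m :
  #|[pred A : 'M[F]_(m, n) | \rank A == m]| = (\prod_(i < m) (#|F| ^ n - #|F| ^ i))%N.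
Proof.
set p := #|F|.
pose fr m := [pred A : 'M[F]_(m, n) | \rank A == m].
rewrite -/(fr m).
elim: m => [| m IHm].
  rewrite big_ord0 (@eq_card1 _ (0 : 'M_(0, n))) //= => A.
  by rewrite flatmx0 !inE mxrank.unlock !eqxx.
rewrite big_ord_recr /= -IHm.
rewrite -sum_nat_const /= -sum1_card -add1n.
rewrite (partition_big dsubmx (fr m)) /= => [|A]; last first.
  rewrite !inE -{1}(vsubmxK A); move: {A}(_ A) (_ A) => Ad Au Afull.
  rewrite eqn_leq rank_leq_row -(leq_add2l (\rank Au)) -mxrank_sum_cap.
  rewrite {1 3}[@mxrank]lock addsmxE (eqnP Afull) -lock -addnA.
  by rewrite leq_add ?rank_leq_row ?leq_addr.
apply: eq_bigr => A rAm; rewrite (reindex (col_mx^~ A)) /=; last first.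
  exists usubmx => [v _ | vA]; first by rewrite col_mxKu.
  by case/andP=> _ /eqP <-; rewrite vsubmxK.
transitivity #|~: [set v *m A | v in 'rV_m]|; last first.
  rewrite cardsCs setCK card_imset ?card_mx ?card_ord ?mul1n //.
  have [B AB1] := row_freeP rAm; apply: can_inj (mulmx^~ B) _ => v.
  by rewrite -mulmxA AB1 mulmx1.
rewrite -sum1_card; apply: eq_bigl => v; rewrite !inE col_mxKd eqxx.
rewrite andbT eqn_leq rank_leq_row /= -(leq_add2r (\rank (v :&: A)%MS)).
rewrite -addsmxE mxrank_sum_cap (eqnP rAm) addnAC leq_add2r.
rewrite (ltn_leqif (mxrank_leqif_sup _)) ?capmxSl // sub_capmx submx_refl.
by congr (~~ _); apply/submxP/imsetP=> [] [u]; exists u.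
Qed.

Section Orb.
Variable F : finFieldType.
Variable n : nat.
Definition G : {set 'M[F]_2} := [set g | \det g == 1].
Definition O (A : 'M[F]_(2, n)) := [set g *m A | g in G].

Lemma G1 : 1%:M \in G. Proof. by rewrite inE det1. Qed.
Lemma GM g h : g \in G -> h \in G -> g *m h \in G.
Proof. by rewrite !inE det_mulmx => /eqP-> /eqP->; rewrite mulr1. Qed.
Lemma GV g : g \in G -> invmx g \in G.
Proof. by rewrite !inE det_inv => /eqP->; rewrite invr1. Qed.
Lemma Gunit g : g \in G -> g \in unitmx.
Proof. by rewrite inE unitmxE => /eqP->; rewrite unitr1. Qed.

Lemma O_refl A : A \in O A.
Proof. by apply/imsetP; exists 1%:M; rewrite ?mul1mx ?G1. Qed.

Lemma O_trans A B : B \in O A -> O B = O A.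
Proof.
case/imsetP=> g gG ->; apply/setP=> C; apply/imsetP/imsetP=> [[h hG ->]|[h hG ->]].
  by exists (h *m g); rewrite ?mulmxA // GM.
exists (h *m invmx g); first by rewrite GM // GV.
by rewrite -mulmxA (mulmxA (invmx g)) mulVmx ?Gunit // mul1mx.
Qed.

Lemma count_orbits :
  (#|[set O A | A : 'M[F]_(2, n)]|)%:R = \sum_(A : 'M[F]_(2, n)) ((#|O A|)%:R)^-1 :> rat.
Proof.
rewrite (partition_big_imset O) /= -sum1_card natr_sum.
apply: eq_bigr => X /imsetP[A0 _ ->].
have -> : \sum_(A | O A == O A0) (#|O A|%:R)^-1 = \sum_(A in O A0) (#|O A0|%:R)^-1 :> rat.
  apply: eq_big => A; last by move=> /eqP->.
  apply/eqP/idP => [<-|/O_trans//]; exact: O_refl.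
rewrite sumr_const -(mulr_natr ((#|O A0|%:R)^-1)) mulVf //.
by rewrite pnatr_eq0 -lt0n; apply/card_gt0P; exists A0; apply: O_refl.
Qed.

Lemma O0 : #|O 0| = 1%N.
Proof.
apply: eq_card1 => B; rewrite !inE; apply/imsetP/eqP => [[g _ ->]|->].
  by rewrite mulmx0.
by exists 1%:M; rewrite ?G1 ?mulmx0.
Qed.

Lemma O_rank2 A : \rank A = 2%N -> #|O A| = #|G|.
Proof.
by move=> rA; apply: card_imset; apply: row_free_inj; rewrite /row_free rA.
Qed.

Lemma cV2_0 (v : 'cV[F]_2) : v 0 0 = 0 -> v 1 0 = 0 -> v = 0.
Proof.
move=> h0 h1; apply/matrixP=> i j; rewrite mxE.
have -> : j = 0 by apply: val_inj; case: j => [[]].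
by case: i => [[|[|//]] ?]; [rewrite -h0|rewrite -h1]; congr (v _ _); apply: val_inj.
Qed.

Lemma mx2_e (a b c d : F) : mx2 a b c d *m delta_mx 0 0 = \col_(i < 2) (if i == 0 then a else c).
Proof.
apply/matrixP=> i j; rewrite !mxE big_ord_recl big_ord1 !mxE.
have -> : j = 0 by apply: val_inj; case: j => [[]].
by case: i => [[|[|//]] ?] /=; rewrite ?mulr1 ?mulr0 ?addr0 ?add0r.
Qed.

Lemma trans_col (v : 'cV[F]_2) : v != 0 -> exists2 h, h \in G & h *m delta_mx 0 0 = v.
Proof.
move=> v0.
have vE : v = \col_(i < 2) (if i == 0 then v 0 0 else v 1 0).
  apply/matrixP=> i j; rewrite mxE.
  have -> : j = 0 by apply: val_inj; case: j => [[]].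
  by case: i => [[|[|//]] ?]; congr (v _ _); apply: val_inj.
have [a0|a0] := eqVneq (v 0 0) 0.
  have b0 : v 1 0 != 0 by apply: contraNneq v0 => b0; apply/eqP; exact: cV2_0.
  exists (mx2 0 (- (v 1 0)^-1) (v 1 0) 0); last by rewrite mx2_e -a0 -vE.
  by rewrite inE det_mx2 mul0r sub0r mulNr opprK mulVf.
exists (mx2 (v 0 0) 0 (v 1 0) (v 0 0)^-1); last by rewrite mx2_e -vE.
by rewrite inE det_mx2 mul0r subr0 mulfV.
Qed.

Lemma trans_col2 (u v : 'cV[F]_2) : u != 0 -> v != 0 -> exists2 g, g \in G & g *m v = u.
Proof.
move=> /trans_col[h hG hu] /trans_col[k kG kv].
exists (h *m invmx k); first by rewrite GM // GV.
by rewrite -kv -mulmxA (mulmxA (invmx k)) mulVmx ?Gunit // mul1mx.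
Qed.

Lemma O_rank1 A : \rank A = 1%N -> #|O A| = (#|F| ^ 2).-1.
Proof.
move=> rA.
have [w Aw fw] : exists2 w : 'M[F]_(1, n), (w :=: A)%MS & row_free w.
  move: (row_base A) (eq_row_base A) (row_base_free A); rewrite rA => w Aw fw.
  by exists w.
set v := A *m pinvmx w.
have defA : A = v *m w by rewrite mulmxKpV // Aw.
have v0 : v != 0.
  by apply: contraTneq isT => v0; move: rA; rewrite defA v0 mul0mx mxrank0.
have -> : O A = [set u *m w | u in [set u : 'cV[F]_2 | u != 0]].
  apply/setP=> B; apply/imsetP/imsetP => [[g gG ->]|[u]].
    exists (g *m v); last by rewrite defA mulmxA.
    rewrite inE; apply: contraNneq v0 => gv0.
    by rewrite -(mul1mx v) -(mulVmx (Gunit gG)) -mulmxA gv0 mulmx0.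
  rewrite inE => u0 ->; have [g gG gv] := trans_col2 u0 v0.
  by exists g; rewrite // defA mulmxA gv.
rewrite card_imset; last exact: row_free_inj.
have -> : [set u : 'cV[F]_2 | u != 0] = [set~ 0] by apply/setP=> u; rewrite !inE.
by rewrite cardsC1 card_mx muln1.
Qed.

Lemma card_G : (#|G| * (#|F| - 1) = (#|F| ^ 2 - 1) * (#|F| ^ 2 - #|F|))%N.
Proof.
have h1 : #|[pred g : 'M[F]_(2, 2) | \rank g == 2%N]| = ((#|F| ^ 2 - 1) * (#|F| ^ 2 - #|F|))%N.
  by rewrite card_fr // big_ord_recl big_ord1 expn0 expn1.
rewrite -h1.
have -> : #|[pred g : 'M[F]_(2, 2) | \rank g == 2%N]| = #|[pred g : 'M[F]_2 | \det g != 0]|.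
  by apply: eq_card => g; rewrite !inE -/(row_free g) row_free_unit unitmxE unitfE.
rewrite -[RHS]sum1_card (partition_big (fun g : 'M[F]_2 => \det g) (fun d => d != 0)) /=; last first.
  by move=> g; rewrite inE.
rewrite subn1 -(cardC1 (0 : F)) mulnC -sum_nat_const.
apply: eq_big => [d|d d0]; first by rewrite !inE.
rewrite sum1_card.
pose D := mx2 d 0 0 1.
have dD : \det D = d by rewrite det_mx2 mulr1 mulr0 subr0.
have uD : D \in unitmx by rewrite unitmxE dD unitfE.
have {}d0 : d != 0 := d0.
transitivity #|(mulmx D) @: G|.
  rewrite card_imset //; apply: can_inj (mulmx (invmx D)) _ => g.
  by rewrite mulmxA mulVmx // mul1mx.
apply: eq_card => g.
apply/imsetP/idP => [[h hG ->]|/andP[_ /eqP gd]].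
  move: hG; rewrite inE => /eqP hd.
  by rewrite unfold_in /= ?inE det_mulmx dD hd mulr1 d0 eqxx.
exists (invmx D *m g); last by rewrite mulmxA mulmxV // mul1mx.
by rewrite inE det_mulmx det_inv dD gd mulVf.
Qed.

Lemma sumr_constP (T : finType) (P : pred T) (c : rat) :
  \sum_(i | P i) c = c *+ #|[pred i | P i]|.
Proof. by rewrite -sumr_const; apply: eq_bigl => i; rewrite inE. Qed.

Definition N2 := #|[pred A : 'M[F]_(2, n) | \rank A == 2%N]|.

Lemma sum_orbits :
  \sum_(A : 'M[F]_(2, n)) ((#|O A|)%:R)^-1 =
  1 + ((#|F| ^ (2 * n))%:R - 1 - N2%:R) / ((#|F| ^ 2).-1)%:R + N2%:R / #|G|%:R :> rat.
Proof.
rewrite (bigD1 0) //= O0 invr1 -addrA; congr (_ + _).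
rewrite (bigID (fun A => \rank A == 2%N)) /= addrC.
have c2 : #|[pred A : 'M[F]_(2, n) | (A != 0) && (\rank A == 2%N)]| = N2.
  apply: eq_card => A; rewrite !inE andb_idl // => /eqP r2.
  by rewrite -mxrank_eq0 r2.
have c1 : (#|[pred A : 'M[F]_(2, n) | (A != 0%R) && (\rank A != 2%N)]| + N2 = (#|F| ^ (2 * n)).-1)%N.
  rewrite -c2 -(card_mx F 2 n) -(cardC1 (0 : 'M[F]_(2, n))) addnC.
  rewrite -(cardID [pred A : 'M[F]_(2, n) | \rank A == 2%N] (predC1 0)).
  by congr (_ + _); apply: eq_card => A; rewrite !inE /= andbC.
congr (_ + _).
  rewrite (eq_bigr (fun _ => ((#|F| ^ 2).-1)%:R^-1)) => [|A /andP[A0 r2]]; last first.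
    rewrite O_rank1 //; have := rank_leq_row A; move: r2.
    rewrite -mxrank_eq0 in A0; move: A0.
    by case: (\rank A) => [|[|[|]]].
  rewrite sumr_constP -(mulr_natl (((#|F| ^ 2).-1)%:R^-1 : rat)); congr (_ * _).
  have q0 : (0 < #|F| ^ (2 * n))%N by rewrite expn_gt0; apply/orP; left; apply/card_gt0P; exists 0.
  apply: (addIr (N2%:R)); rewrite subrK -(natrD _ _ N2) c1.
  by rewrite -subn1 natrB.
rewrite (eq_bigr (fun _ => (#|G|%:R)^-1)) => [|A /andP[A0 r2]]; last first.
  by rewrite O_rank2 //; apply/eqP.
by rewrite sumr_constP c2 -(mulr_natl ((#|G|%:R)^-1 : rat)).
Qed.
End Orb.

Definition orbR (R : finComUnitRingType) n (A : 'M[R]_(2, n)) : {set 'M[R]_(2, n)} :=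
  [set B | Defs.decP (exists M : 'M[int]_2, \det M = 1 /\ map_mx (fun z : int => z%:~R) M *m A = B)].
Definition rR (R : finComUnitRingType) n : nat := #|[set orbR A | A : 'M[R]_(2, n)]|.

Lemma transfer p n : prime p -> r p n = rR 'F_p n.
Proof.
move=> pr.
pose f m := rR 'I_m.+2 n.
have -> : r p n = f (Zp_trunc p) by [].
by rewrite -(Fp_Zcast pr).
Qed.

Section Gen.
Variable F : finFieldType.
Hypothesis hlift : forall x : F, exists k : int, k%:~R = x.
Variable n : nat.

Lemma orbRE (A : 'M[F]_(2, n)) : orbR A = O A.
Proof.
apply/setP=> B; rewrite inE; apply/idP/imsetP.
  move/decPE=> [M [dM <-]]; exists (map_mx (fun z : int => z%:~R) M) => //.
  by rewrite inE det_map_mx dM rmorph1.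
move=> [g]; rewrite inE => /eqP /(lift_all hlift) [M [dM gM]] ->.
by apply/decPE; exists M; rewrite gM.
Qed.

Lemma main_gen : (rR F n)%:R =
  1 + ((#|F| ^ (2 * n))%:R - 1 - (N2 F n)%:R) / ((#|F| ^ 2).-1)%:R
    + (N2 F n)%:R / (#|G F|)%:R :> rat.
Proof.
rewrite /rR (eq_imset _ orbRE).
by rewrite count_orbits sum_orbits.
Qed.
End Gen.

Lemma alg (p n N Gc : nat) : (2 <= p)%N -> (1 <= n)%N ->
  N = ((p ^ n - 1) * (p ^ n - p))%N ->
  (Gc * (p - 1) = (p ^ 2 - 1) * (p ^ 2 - p))%N ->
  1 + ((p ^ (2 * n))%:R - 1 - N%:R) / ((p ^ 2).-1)%:R + N%:R / Gc%:R =
  ((p%:R ^+ (2 * n - 1) + p%:R ^+ (n + 1) - p%:R ^+ (n - 1) + p%:R ^+ 2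
      - p%:R - 1) / (p%:R ^+ 2 - 1) : rat).
Proof.
move=> p2 n1 hN hG.
have p1 : (1 <= p)%N by lia.
have pn1 : (1 <= p ^ n)%N by rewrite expn_gt0; lia.
have pnp : (p <= p ^ n)%N by rewrite -{1}(expn1 p) leq_pexp2l.
have p21 : (1 <= p ^ 2)%N by rewrite expn_gt0; lia.
have p2p : (p <= p ^ 2)%N by rewrite -{1}(expn1 p) leq_pexp2l.
have {}hN : N%:R = ((p%:R ^+ n - 1) * (p%:R ^+ n - p%:R) : rat).
  by rewrite hN natrM !natrB // natrX.
have {}hG : Gc%:R * (p%:R - 1) = ((p%:R ^+ 2 - 1) * (p%:R ^+ 2 - p%:R) : rat).
  by have := congr1 (fun k => k%:R : rat) hG; rewrite /= !natrM !natrB // !natrX.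
have hp2 : ((p ^ 2).-1)%:R = (p%:R ^+ 2 - 1 : rat) by rewrite -subn1 natrB // natrX.
rewrite hN hp2 natrX.
set q : rat := p%:R.
have q2 : 2 <= q by rewrite /q (ler_nat rat 2 p).
have q1 : q - 1 != 0 by apply/eqP; lra.
have {}hG : Gc%:R = q * (q ^+ 2 - 1).
  by apply: (mulIf q1); rewrite hG; ring.
rewrite hG.
case: n n1 {hN pn1 pnp} => [//|m] _.
have e1 : q ^+ (2 * m.+1) = q ^+ 2 * (q ^+ m) ^+ 2 by rewrite -exprM -exprD; congr (_ ^+ _); lia.
have e2 : q ^+ (2 * m.+1 - 1) = q * (q ^+ m) ^+ 2 by rewrite -exprM -exprS; congr (_ ^+ _); lia.
have e3 : q ^+ (m.+1 + 1) = q ^+ 2 * q ^+ m by rewrite -exprD; congr (_ ^+ _); lia.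
have e4 : q ^+ (m.+1 - 1) = q ^+ m by congr (_ ^+ _); lia.
have e5 : q ^+ m.+1 = q * q ^+ m by rewrite exprS.
rewrite e1 e2 e3 e4 e5.
set x := q ^+ m.
have h1 : q ^+ 2 - 1 != 0 by apply/eqP; nra.
have h0 : q != 0 by apply/eqP; lra.
field.
by rewrite h1 h0.
Qed.

Theorem theorem4p3 (p n : nat) : prime p -> (1 <= n)%N ->
  (r p n)%:R =
    ((p%:R ^+ (2 * n - 1) + p%:R ^+ (n + 1) - p%:R ^+ (n - 1) + p%:R ^+ 2
      - p%:R - 1) / (p%:R ^+ 2 - 1) : rat).
Proof.
move=> pr n1.
have hlift : forall x : 'F_p, exists k : int, k%:~R = x.
  by move=> x; exists (Posz (nat_of_ord x)); rewrite -pmulrn natr_Zp.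
rewrite transfer // main_gen // card_Fp //.
apply: alg => //.
- exact: prime_gt1.
- by rewrite /N2 card_fr card_Fp // big_ord_recl big_ord1 expn0 expn1.
- by have := @card_G 'F_p; rewrite card_Fp.
Qed.
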